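(* Let $q_1^2(x),q_2^2(x)$ be positive piecewise-constant functions on $[0,1]$ with finitely many discontinuity points, and set $a_j(x):=q_j^{-2}(x)$, $j=1,2$. For $k\ge 0$ let $\psi_j(x,k)$ be the solution of $$-\psi_j''(x,k)+k^2q_j^2(x)\psi_j(x,k)=0,\quad 0\le x\le 1,\qquad \psi_j'(0,k)=0,\quad \psi_j(0,k)=1,$$ and for $\lambda\ge 0$ let $v_j(x,\lambda)$ be a nontrivial solution of $$\lambda v_j-(a_j(x)v_j')'=0,\quad 0\le x\le 1,\qquad v_j(0,\lambda)=0$$ (primes denote $d/dx$). Then the sets $\{\psi_1(x,k)\psi_2(x,k)\}_{k\ge 0}$ and $\{v_1'(x,\lambda)v_2'(x,\lambda)\}_{\lambda\ge 0}$ are dense in the set $\Pi$ of piecewise-constant functions on $[0,1]$ (with finitely many discontinuity points), in the following sense: if $h\in\Pi$ and $\int_0^1 h(x)\psi_1(x,k)\psi_2(x,k)\,dx=0$ for all $k>0$, then $h=0$; and if $h\in\Pi$ and $\int_0^1 h(x)v_1'(x,\lambda)v_2'(x,\lambda)\,dx=0$ for all $\lambda>0$, then $h=0$.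
   Context: $\Pi$ denotes the set of piecewise-constant functions on $[0,1]$ with finitely many discontinuity points. The solutions of the differential equations with piecewise-constant coefficients are understood in the usual sense for such equations (e.g. $\psi_j$ is the solution of the integral equation $\psi_j(x,k)=1+k^2\int_0^x(x-s)q_j^2(s)\psi_j(s,k)\,ds$, and $a_jv_j'$ is continuous). The property stated (completeness of products of solutions) is called Property C of the pair of operators $\ell_j=-\frac{d^2}{dx^2}+k^2q_j^2(x)$, resp. $L_ju=-[a_j(x)u']'+\lambda u$. *)

(* Defs.v *)
From Stdlib Require Import Reals List.
From Coquelicot Require Import Coquelicot.
Open Scope R_scope.

(* Values at the t_i are arbitrary. *)
Definition pw_const (f : R -> R) : Prop :=
  exists (n : nat) (t : nat -> R),
    t O = 0 /\ t n = 1 /\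
    (forall i, (i < n)%nat -> t i < t (S i)) /\
    (forall i, (i < n)%nat -> exists c : R,
        forall x, t i < x < t (S i) -> f x = c).

(* h = 0 as an element of Pi: h vanishes on [0,1] except at finitely many points. *)
Definition zero_on_01 (h : R -> R) : Prop :=
  exists l : list R, forall x, 0 <= x <= 1 -> ~ In x l -> h x = 0.

(* psi(., k) solves psi(x,k) = 1 + k^2 int_0^x (x-s) q^2(s) psi(s,k) ds on [0,1],
   for every k >= 0 (the usual sense of -psi'' + k^2 q^2 psi = 0, psi(0)=1, psi'(0)=0). *)
Definition is_psi (q : R -> R) (psi : R -> R -> R) : Prop :=
  forall k, 0 <= k -> forall x, 0 <= x <= 1 ->
    exists I, is_RInt (fun s => (x - s) * (q s ^ 2) * psi s k) 0 x I /\
              psi x k = 1 + k ^ 2 * I.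

(* v(., lambda) is a nontrivial solution of lambda v - (a v')' = 0, v(0)=0, a = q^{-2},
   in the usual sense: with the flux w = a v' (continuous), v(x) = int_0^x q^2 w and
   w(x) = w(0) + lambda int_0^x v, for every lambda >= 0. *)
Definition is_v (q : R -> R) (v : R -> R -> R) : Prop :=
  forall lam, 0 <= lam ->
    v 0 lam = 0 /\
    (exists x, 0 <= x <= 1 /\ v x lam <> 0) /\
    exists w : R -> R, forall x, 0 <= x <= 1 ->
      is_RInt (fun s => q s ^ 2 * w s) 0 x (v x lam) /\
      exists I, is_RInt (fun s => v s lam) 0 x I /\ w x = w 0 + lam * I.

(* Main.v *)
Require Import Defs.
From Stdlib Require Import Reals List Lra Lia Psatz Classical ZArith.
From Coquelicot Require Import Coquelicot.
Open Scope R_scope.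

Lemma arch_nat r : exists N : nat, r <= INR N.
Proof.
  destruct (archimed r) as [H _].
  destruct (Z_le_gt_dec 0 (up r)) as [Hz|Hz].
  - exists (Z.to_nat (up r)). rewrite INR_IZR_INZ, Z2Nat.id by auto. lra.
  - exists O. simpl. apply Z.gt_lt in Hz. apply IZR_lt in Hz. lra.
Qed.

Lemma loc_int (a b x : R) (P : R -> Prop) : a < x < b -> (forall y, a < y < b -> P y) -> locally x P.
Proof. intros Hx HP.
  assert (He : 0 < Rmin (x-a) (b-x)) by (apply Rmin_pos; lra).
  exists (mkposreal _ He). intros y Hy. apply HP.
  change (Rabs (y - x) < Rmin (x-a) (b-x)) in Hy.
  pose proof (Rmin_l (x-a) (b-x)). pose proof (Rmin_r (x-a) (b-x)).
  apply Rabs_def2 in Hy. lra. Qed.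

Lemma exC1 (f : R -> R) a b c : a <= b <= c -> ex_RInt f a c -> ex_RInt f a b.
Proof. intros H1 H2. exact (ex_RInt_Chasles_1 f a b c H1 H2). Qed.
Lemma exC2 (f : R -> R) a b c : a <= b <= c -> ex_RInt f a c -> ex_RInt f b c.
Proof. intros H1 H2. exact (ex_RInt_Chasles_2 f a b c H1 H2). Qed.

Lemma RInt_correct_R (f : R -> R) a b : ex_RInt f a b -> is_RInt f a b (RInt f a b).
Proof. intros H. exact (RInt_correct f a b H). Qed.
Lemma is_RInt_unique_R (f : R -> R) a b (l : R) : is_RInt f a b l -> RInt f a b = l.
Proof. intros H. exact (is_RInt_unique f a b l H). Qed.
Lemma is_RInt_Chasles_R (f : R -> R) a b c (l1 l2 : R) : is_RInt f a b l1 -> is_RInt f b c l2 -> is_RInt f a c (l1 + l2).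
Proof. intros H1 H2. exact (is_RInt_Chasles f a b c l1 l2 H1 H2). Qed.

Lemma RInt_Chasles_R (f : R -> R) a b c : ex_RInt f a b -> ex_RInt f b c ->
  RInt f a b + RInt f b c = RInt f a c.
Proof. intros H1 H2. exact (RInt_Chasles f a b c H1 H2). Qed.

Lemma is_RInt_mulc (f : R -> R) (a b I C : R) : is_RInt f a b I -> is_RInt (fun x => C * f x) a b (C * I).
Proof. intros H. exact (is_RInt_scal f a b C I H). Qed.

Lemma is_RInt_zero a b : is_RInt (fun _ => 0) a b 0.
Proof. pose proof (is_RInt_const a b 0). change (scal (b-a) 0) with ((b-a)*0) in H.
  rewrite Rmult_0_r in H. exact H. Qed.

Lemma RInt_const_R a b (C : R) : RInt (fun _ => C) a b = (b - a) * C.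
Proof. exact (RInt_const a b C). Qed.

Lemma RInt_point_R (f : R -> R) a : RInt f a a = 0.
Proof. exact (RInt_point a f). Qed.

Lemma ex_RInt_ub_R (f : R -> R) a b : a <= b -> ex_RInt f a b ->
  exists M, 0 <= M /\ forall t, a <= t <= b -> Rabs (f t) <= M.
Proof. intros Hab H. destruct (ex_RInt_ub f a b H) as [M HM].
  exists (Rmax M 0). split. apply Rmax_r. intros t Ht.
  eapply Rle_trans. apply (HM t). rewrite Rmin_left, Rmax_right by lra. auto. apply Rmax_l. Qed.

Lemma is_RInt_diff (f : R -> R) (x y A B : R) : 0 <= x <= y -> is_RInt f 0 x A -> is_RInt f 0 y B ->
  ex_RInt f x y /\ RInt f x y = B - A.
Proof. intros Hxy HA HB.
  assert (E0y : ex_RInt f 0 y) by (eexists; eauto).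
  assert (E0x : ex_RInt f 0 x) by (eexists; eauto).
  assert (Exy : ex_RInt f x y) by (apply exC2 with 0; [lra|auto]).
  split; auto. pose proof (RInt_Chasles_R f 0 x y E0x Exy).
  rewrite (is_RInt_unique_R _ _ _ _ HA), (is_RInt_unique_R _ _ _ _ HB) in H. lra. Qed.

Lemma fin_pts (f g : R -> R) l : forall a b (I : R), a <= b ->
  (forall x, a < x < b -> ~ In x l -> f x = g x) -> is_RInt f a b I -> is_RInt g a b I.
Proof.
  induction l as [|p l IH]; intros a b I Hab Hfg Hf.
  - apply is_RInt_ext with f; [|exact Hf]. intros x Hx.
    rewrite Rmin_left, Rmax_right in Hx by lra. apply Hfg; auto.
  - destruct (classic (a < p < b)) as [Hp|Hp].
    + assert (E : ex_RInt f a b) by (eexists; eauto).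
      assert (E1 : ex_RInt f a p) by (apply exC1 with b; [lra|auto]).
      assert (E2 : ex_RInt f p b) by (apply exC2 with a; [lra|auto]).
      assert (HI : I = RInt f a p + RInt f p b).
      { rewrite (RInt_Chasles_R f a p b E1 E2). symmetry. apply is_RInt_unique_R; auto. }
      rewrite HI. apply (is_RInt_Chasles_R g a p b).
      * apply IH; [lra| |apply RInt_correct_R; auto]. intros x Hx Hn. apply Hfg. lra.
        intros [Hx'|Hx']; [lra|tauto].
      * apply IH; [lra| |apply RInt_correct_R; auto]. intros x Hx Hn. apply Hfg. lra.
        intros [Hx'|Hx']; [lra|tauto].
    + apply IH; auto. intros x Hx Hn. apply Hfg; auto. intros [Hx'|Hx']; [subst; lra|tauto].
Qed.

Lemma core (G : R -> R) (c d b H L : R) :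
  0 <= c -> c < d -> d < b -> b <= 1 ->
  is_RInt G 0 1 0 -> is_RInt G b 1 0 ->
  (forall x, 0 <= x <= c -> Rabs (G x) <= H) ->
  (forall x, c < x < b -> 0 <= G x) ->
  (forall x, d < x < b -> L <= G x) ->
  (b - d) * L <= c * H.
Proof.
  intros Hc Hcd Hdb Hb1 HG1 HGb HA HB HL.
  assert (E01 : ex_RInt G 0 1) by (eexists; eauto).
  assert (Eb1 : ex_RInt G b 1) by (eexists; eauto).
  assert (E0b : ex_RInt G 0 b) by (apply exC1 with 1; [lra|auto]).
  assert (E0c : ex_RInt G 0 c) by (apply exC1 with b; [lra|auto]).
  assert (Ecb : ex_RInt G c b) by (apply exC2 with 0; [lra|auto]).
  assert (Ecd : ex_RInt G c d) by (apply exC1 with b; [lra|auto]).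
  assert (Edb : ex_RInt G d b) by (apply exC2 with c; [lra|auto]).
  pose proof (RInt_Chasles_R G 0 b 1 E0b Eb1) as S0.
  rewrite (is_RInt_unique_R _ _ _ _ HG1), (is_RInt_unique_R _ _ _ _ HGb) in S0.
  pose proof (RInt_Chasles_R G 0 c b E0c Ecb) as S1.
  pose proof (RInt_Chasles_R G c d b Ecd Edb) as S2.
  assert (B1 : Rabs (RInt G 0 c) <= (c - 0) * H) by (apply abs_RInt_le_const; auto).
  assert (B2 : 0 <= RInt G c d) by (apply RInt_ge_0; [lra|auto|intros; apply HB; lra]).
  assert (B3 : RInt (fun _ => L) d b <= RInt G d b).
  { apply RInt_le; [lra|apply ex_RInt_const|auto|intros; apply HL; lra]. }
  rewrite RInt_const_R in B3.
  apply Rabs_le_between in B1. lra.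
Qed.
Lemma t_mono (n:nat) (t:nat->R) : (forall i, (i<n)%nat -> t i < t (S i)) ->
  forall i j, (i <= j)%nat -> (j <= n)%nat -> t i <= t j.
Proof.
  intros Ht i j Hij. induction Hij; intros Hj. lra.
  specialize (IHHij ltac:(lia)). specialize (Ht m ltac:(lia)). lra.
Qed.

Lemma locate (n:nat) (t:nat->R) : (forall i, (i<n)%nat -> t i < t (S i)) ->
  forall j, (j <= n)%nat -> forall x, t O < x <= t j -> exists i, (i < j)%nat /\ t i < x <= t (S i).
Proof.
  intros Ht j. induction j; intros Hj x Hx. lra.
  destruct (Rle_dec x (t j)) as [H|H].
  - destruct (IHj ltac:(lia) x ltac:(lra)) as [i [Hi1 Hi2]]. exists i. split; [lia|auto].
  - exists j. split; [lia|lra].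
Qed.

Lemma pw_bound f : pw_const f -> exists M, forall x, 0 <= x <= 1 -> Rabs (f x) <= M.
Proof.
  intros [n [t [H0 [H1 [Ht Hc]]]]].
  assert (forall j, (j <= n)%nat -> exists M, forall x, 0 <= x <= t j -> Rabs (f x) <= M).
  { induction j; intros Hj.
    - exists (Rabs (f 0)). intros x Hx. rewrite H0 in Hx. replace x with 0 by lra. lra.
    - destruct (IHj ltac:(lia)) as [M HM]. destruct (Hc j ltac:(lia)) as [c Hcj].
      exists (Rmax M (Rmax (Rabs c) (Rabs (f (t (S j)))))).
      pose proof (Rmax_l M (Rmax (Rabs c) (Rabs (f (t (S j)))))).
      pose proof (Rmax_r M (Rmax (Rabs c) (Rabs (f (t (S j)))))).
      pose proof (Rmax_l (Rabs c) (Rabs (f (t (S j))))).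
      pose proof (Rmax_r (Rabs c) (Rabs (f (t (S j))))).
      intros x Hx. destruct (Rle_dec x (t j)).
      + specialize (HM x ltac:(lra)). lra.
      + destruct (Req_dec x (t (S j))) as [E|E].
        * subst x. lra.
        * rewrite (Hcj x ltac:(lra)). lra. }
  destruct (H n (Nat.le_refl n)) as [M HM]. exists M. intros x Hx. apply HM. lra.
Qed.

Lemma pw_lower f : pw_const f -> (forall x, 0 <= x <= 1 -> 0 < f x) ->
  exists m, 0 < m /\ forall x, 0 <= x <= 1 -> m <= f x.
Proof.
  intros Hf Hpos.
  assert (Hi : pw_const (fun x => / f x)).
  { destruct Hf as [n [t [H0 [H1 [Ht Hc]]]]]. exists n, t. repeat split; auto.
    intros i Hi. destruct (Hc i Hi) as [c Hcc]. exists (/ c). intros x Hx. rewrite Hcc; auto. }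
  destruct (pw_bound _ Hi) as [M HM].
  assert (HM0 : 0 < M).
  { specialize (HM 0 ltac:(lra)). specialize (Hpos 0 ltac:(lra)).
    pose proof (Rinv_0_lt_compat _ Hpos). rewrite Rabs_pos_eq in HM; lra. }
  exists (/ M). split. apply Rinv_0_lt_compat; auto.
  intros x Hx. specialize (HM x Hx). specialize (Hpos x Hx).
  pose proof (Rinv_0_lt_compat _ Hpos). rewrite Rabs_pos_eq in HM by lra.
  rewrite <- (Rinv_inv (f x)). apply Rinv_le_contravar; auto.
Qed.

Lemma pw_left f : pw_const f -> forall b, 0 < b <= 1 ->
  exists a c, a < b /\ forall x, a < x < b -> f x = c.
Proof.
  intros [n [t [H0 [H1 [Ht Hc]]]]] b Hb.
  destruct (locate n t Ht n (Nat.le_refl n) b ltac:(lra)) as [i [Hi1 Hi2]].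
  destruct (Hc i Hi1) as [c Hcc]. exists (t i), c. split. lra.
  intros x Hx. apply Hcc. lra.
Qed.

Lemma pw_pts f : pw_const f -> exists l, forall x, 0 < x < 1 -> ~ In x l ->
  exists a b c, a < x < b /\ forall y, a < y < b -> f y = c.
Proof.
  intros [n [t [H0 [H1 [Ht Hc]]]]].
  exists (map t (seq 0 (S n))). intros x Hx Hn.
  destruct (locate n t Ht n (Nat.le_refl n) x ltac:(lra)) as [i [Hi1 Hi2]].
  destruct (Hc i Hi1) as [c Hcc].
  assert (x <> t (S i)).
  { intros E. apply Hn. rewrite E. apply in_map. apply in_seq. lia. }
  exists (t i), (t (S i)), c. split. lra. auto.
Qed.

Lemma descend (P : nat -> Prop) n : P n -> ~ P O -> exists j, (j < n)%nat /\ P (S j) /\ ~ P j.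
Proof.
  induction n; intros Hn H0. contradiction.
  destruct (classic (P n)) as [H|H].
  - destruct (IHn H H0) as [j [Hj1 Hj2]]. exists j. split; [lia|auto].
  - exists n. split; [lia|auto].
Qed.

Lemma pw_last h : pw_const h -> ~ zero_on_01 h ->
  exists a b C l, 0 <= a /\ a < b /\ b <= 1 /\ C <> 0 /\ (forall x, a < x < b -> h x = C) /\
    (forall x, b < x < 1 -> ~ In x l -> h x = 0).
Proof.
  intros [n [t [H0 [H1 [Ht Hc]]]]] Hnz.
  set (Z := fun j => exists l, forall x, t j < x < 1 -> ~ In x l -> h x = 0).
  assert (Zn : Z n). { exists nil. intros x Hx. lra. }
  assert (Z0 : ~ Z O).
  { intros [l Hl]. apply Hnz. exists (0 :: 1 :: l). intros x Hx Hn.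
    apply Hl. rewrite H0. split.
    - destruct (Req_dec x 0); [subst; exfalso; apply Hn; left; auto|lra].
    - destruct (Req_dec x 1); [subst; exfalso; apply Hn; right; left; auto|lra].
    - intros Hin. apply Hn. right. right. auto. }
  destruct (descend Z n Zn Z0) as [j [Hj [[l Hl] HnZ]]].
  destruct (Hc j Hj) as [c Hcc].
  pose proof (t_mono n t Ht O j ltac:(lia) ltac:(lia)).
  pose proof (t_mono n t Ht (S j) n ltac:(lia) ltac:(lia)).
  pose proof (Ht j Hj).
  exists (t j), (t (S j)), c, l. repeat split; try lra.
  - intros Ec. apply HnZ. exists (t (S j) :: l). intros x Hx Hn.
    destruct (Rlt_le_dec x (t (S j))).
    + rewrite Hcc; [auto|lra].
    + destruct (Req_dec x (t (S j))) as [E|E].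
      * exfalso. apply Hn. left. auto.
      * apply Hl. lra. intros Hin. apply Hn. right. auto.
  - auto.
  - auto.
Qed.
Lemma psilem q psi m k : is_psi q psi -> 0 < m -> (forall x, 0 <= x <= 1 -> m <= q x ^ 2) -> 0 < k ->
  (forall x, 0 <= x <= 1 -> 1 <= psi x k) /\
  (forall x y, 0 <= x <= y /\ y <= 1 -> psi x k <= psi y k) /\
  (forall c d, 0 <= c < d /\ d <= 1 -> psi c k * (1 + k ^ 2 * m * (d - c) ^ 2 / 4) <= psi d k).
Proof.
  intros Hpsi Hm Hqm Hk.
  set (F := fun x s => (x - s) * (q s ^ 2) * psi s k).
  assert (Hk2 : 0 < k ^ 2) by (apply pow_lt; auto).
  assert (HP : forall x, 0 <= x <= 1 -> is_RInt (F x) 0 x (RInt (F x) 0 x) /\ psi x k = 1 + k ^ 2 * RInt (F x) 0 x).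
  { intros x Hx. destruct (Hpsi k ltac:(lra) x Hx) as [I [HI1 HI2]].
    assert (E : RInt (F x) 0 x = I) by (apply is_RInt_unique_R; exact HI1). rewrite E. auto. }
  assert (A : forall x y, 0 <= x <= y -> y <= 1 -> (forall s, 0 < s < x -> 0 <= q s ^ 2 * psi s k) ->
     ex_RInt (F y) x y /\ psi x k + k ^ 2 * RInt (F y) x y <= psi y k).
  { intros x y Hxy Hy1 Hg.
    destruct (HP x ltac:(lra)) as [Ix Px]. destruct (HP y ltac:(lra)) as [Iy Py].
    assert (E0y : ex_RInt (F y) 0 y) by (eexists; eauto).
    assert (E0x : ex_RInt (F y) 0 x) by (apply exC1 with y; [lra|auto]).
    assert (Exy : ex_RInt (F y) x y) by (apply exC2 with 0; [lra|auto]).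
    split; auto.
    pose proof (RInt_Chasles_R _ 0 x y E0x Exy) as Ch.
    assert (Le : RInt (F x) 0 x <= RInt (F y) 0 x).
    { apply RInt_le; [lra|eexists; eauto|auto|]. intros s Hs. unfold F.
      specialize (Hg s Hs).
      replace ((x - s) * q s ^ 2 * psi s k) with ((x - s) * (q s ^ 2 * psi s k)) by ring.
      replace ((y - s) * q s ^ 2 * psi s k) with ((y - s) * (q s ^ 2 * psi s k)) by ring.
      apply Rmult_le_compat_r; lra. }
    rewrite Px, Py. rewrite <- Ch. nra. }
  destruct (HP 1 ltac:(lra)) as [I1 _].
  destruct (ex_RInt_ub_R (F 1) 0 1 ltac:(lra) ltac:(eexists; eauto)) as [K [HK0 HK]].
  assert (KB : forall s y, 0 <= s <= y -> y <= 1 -> Rabs (F y s) <= K).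
  { intros s y Hs Hy. eapply Rle_trans; [|apply (HK s); lra]. unfold F.
    replace ((y - s) * q s ^ 2 * psi s k) with ((y - s) * (q s ^ 2 * psi s k)) by ring.
    replace ((1 - s) * q s ^ 2 * psi s k) with ((1 - s) * (q s ^ 2 * psi s k)) by ring.
    rewrite !Rabs_mult, (Rabs_pos_eq (y - s)), (Rabs_pos_eq (1 - s)) by lra.
    apply Rmult_le_compat_r. apply Rmult_le_pos; apply Rabs_pos. lra. }
  set (delta := / (2 * k ^ 2 * (K + 1))).
  assert (Hd : 0 < delta) by (unfold delta; apply Rinv_0_lt_compat; nra).
  assert (Hd2 : k ^ 2 * delta * (K + 1) = / 2) by (unfold delta; field; nra).
  assert (Pos : forall N x, 0 <= x <= 1 -> x <= INR N * delta -> 1 <= psi x k).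
  { induction N; intros x Hx HxN.
    - simpl in HxN. replace x with 0 by lra. destruct (HP 0 ltac:(lra)) as [_ P0].
      rewrite P0, RInt_point_R. lra.
    - set (x1 := INR N * delta).
      assert (Hx1 : 0 <= x1) by (unfold x1; pose proof (pos_INR N); nra).
      destruct (Rle_dec x x1) as [Hle|Hlt]. apply IHN; auto.
      rewrite S_INR in HxN.
      assert (Gx1 : forall s, 0 < s < x1 -> 0 <= q s ^ 2 * psi s k).
      { intros s Hs. assert (1 <= psi s k) by (apply IHN; unfold x1 in *; lra).
        assert (m <= q s ^ 2) by (apply Hqm; lra). nra. }
      assert (P1 : 1 <= psi x1 k) by (apply IHN; unfold x1 in *; lra).
      assert (Pass1 : forall y, x1 < y <= x -> / 2 <= psi y k).
      { intros y Hy. destruct (A x1 y ltac:(lra) ltac:(lra) Gx1) as [Ex Hy2].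
        assert (B : Rabs (RInt (F y) x1 y) <= (y - x1) * K).
        { apply abs_RInt_le_const; auto. lra. intros s Hs. apply KB; lra. }
        apply Rabs_le_between in B.
        assert ((y - x1) * K <= delta * K) by (apply Rmult_le_compat_r; unfold x1 in *; lra).
        nra. }
      destruct (A x1 x ltac:(lra) ltac:(lra) Gx1) as [Ex Hx2].
      assert (0 <= RInt (F x) x1 x).
      { apply RInt_ge_0; [lra|auto|]. intros s Hs. unfold F.
        assert (/2 <= psi s k) by (apply Pass1; lra).
        assert (m <= q s ^ 2) by (apply Hqm; lra).
        replace ((x - s) * q s ^ 2 * psi s k) with ((x - s) * (q s ^ 2 * psi s k)) by ring.
        apply Rmult_le_pos; nra. }
      nra. }
  assert (Pos' : forall x, 0 <= x <= 1 -> 1 <= psi x k).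
  { intros x Hx. destruct (arch_nat (x / delta)) as [N HN]. apply (Pos N); auto.
    apply Rmult_le_reg_r with (/ delta). apply Rinv_0_lt_compat; auto.
    rewrite Rmult_assoc, Rinv_r by lra. lra. }
  assert (Gall : forall s, 0 <= s <= 1 -> 0 <= q s ^ 2 * psi s k).
  { intros s Hs. assert (1 <= psi s k) by auto. assert (m <= q s ^ 2) by auto. nra. }
  assert (Mono : forall x y, 0 <= x <= y /\ y <= 1 -> psi x k <= psi y k).
  { intros x y Hxy. destruct (A x y ltac:(lra) ltac:(lra) ltac:(intros; apply Gall; lra)) as [Ex Hx2].
    assert (0 <= RInt (F y) x y).
    { apply RInt_ge_0; [lra|auto|]. intros s Hs. unfold F.
      replace ((y - s) * q s ^ 2 * psi s k) with ((y - s) * (q s ^ 2 * psi s k)) by ring.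
      apply Rmult_le_pos; [lra|apply Gall; lra]. }
    nra. }
  repeat split; auto.
  intros c d Hcd.
  destruct (A c d ltac:(lra) ltac:(lra) ltac:(intros; apply Gall; lra)) as [Ex Hx2].
  set (mid := (c + d) / 2).
  assert (E1 : ex_RInt (F d) c mid) by (apply exC1 with d; [unfold mid; lra|auto]).
  assert (E2 : ex_RInt (F d) mid d) by (apply exC2 with c; [unfold mid; lra|auto]).
  pose proof (RInt_Chasles_R _ c mid d E1 E2) as Ch.
  assert (R2 : 0 <= RInt (F d) mid d).
  { apply RInt_ge_0; [unfold mid; lra|auto|]. intros s Hs. unfold F.
    replace ((d - s) * q s ^ 2 * psi s k) with ((d - s) * (q s ^ 2 * psi s k)) by ring.
    apply Rmult_le_pos; [lra|apply Gall; unfold mid in *; lra]. }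
  assert (R1 : RInt (fun _ => (d - c) / 2 * (m * psi c k)) c mid <= RInt (F d) c mid).
  { apply RInt_le; [unfold mid; lra|apply ex_RInt_const|auto|]. intros s Hs. unfold F, mid in *.
    assert (psi c k <= psi s k) by (apply Mono; lra).
    assert (1 <= psi c k) by (apply Pos'; lra).
    assert (m <= q s ^ 2) by (apply Hqm; lra).
    replace ((d - s) * q s ^ 2 * psi s k) with ((d - s) * (q s ^ 2 * psi s k)) by ring.
    apply Rmult_le_compat; try lra. apply Rmult_le_pos; lra.
    apply Rmult_le_compat; lra. }
  rewrite RInt_const_R in R1. unfold mid in R1.
  assert (Hb : (d - c) ^ 2 / 4 * (m * psi c k) <= RInt (F d) c d).
  { rewrite <- Ch. assert (Eq : (d - c) ^ 2 / 4 * (m * psi c k) = ((c + d) / 2 - c) * ((d - c) / 2 * (m * psi c k))) by field.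
    rewrite Eq. unfold mid in *. lra. }
  assert (k ^ 2 * ((d - c) ^ 2 / 4 * (m * psi c k)) <= k ^ 2 * RInt (F d) c d) by (apply Rmult_le_compat_l; lra).
  nra.
Qed.
Lemma lim_half a B : (forall n, Rabs a <= B * (/2) ^ n) -> a = 0.
Proof.
  intros H. destruct (Req_dec a 0) as [E|E]; auto. exfalso.
  assert (Ha : 0 < Rabs a) by (apply Rabs_pos_lt; auto).
  assert (HB1 : 0 < Rabs B + 1) by (pose proof (Rabs_pos B); lra).
  destruct (pow_lt_1_zero (/2) ltac:(rewrite Rabs_pos_eq; lra) (Rabs a / (Rabs B + 1))
    ltac:(apply Rdiv_lt_0_compat; auto)) as [N HN].
  specialize (HN N (Nat.le_refl N)). specialize (H N).
  assert (Hp : 0 <= (/2) ^ N) by (apply pow_le; lra).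
  rewrite Rabs_pos_eq in HN by auto.
  assert (HN' : (/2) ^ N * (Rabs B + 1) < Rabs a).
  { apply Rmult_lt_compat_r with (r := Rabs B + 1) in HN; auto.
    unfold Rdiv in HN. rewrite Rmult_assoc, Rinv_l in HN by lra. lra. }
  assert (B * (/2) ^ N <= Rabs B * (/2) ^ N) by (apply Rmult_le_compat_r; auto; apply Rle_abs).
  nra.
Qed.

Section Pair.
Variables (q V W : R -> R) (lam Mq : R).
Hypothesis Hl : 0 < lam.
Hypothesis HqM : forall x, 0 <= x <= 1 -> q x ^ 2 <= Mq.
Hypothesis HV : forall x, 0 <= x <= 1 -> is_RInt (fun s => q s ^ 2 * W s) 0 x (V x).
Hypothesis HW : forall x, 0 <= x <= 1 -> is_RInt V 0 x ((W x - W 0) / lam).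

Lemma pair_dV x y : 0 <= x <= y -> y <= 1 ->
  ex_RInt (fun s => q s ^ 2 * W s) x y /\ RInt (fun s => q s ^ 2 * W s) x y = V y - V x.
Proof. intros. apply is_RInt_diff; auto; [apply HV|apply HV]; lra. Qed.

Lemma pair_dW x y : 0 <= x <= y -> y <= 1 ->
  ex_RInt V x y /\ RInt V x y = (W y - W x) / lam.
Proof. intros. destruct (is_RInt_diff V x y _ _ H (HW x ltac:(lra)) (HW y ltac:(lra))) as [E1 E2].
  split; auto. rewrite E2. change ((W y - W 0) / lam - (W x - W 0) / lam = (W y - W x) / lam :> R). unfold Rdiv; ring. Qed.

Lemma pair_V x : 0 <= x <= 1 -> V x = RInt (fun s => q s ^ 2 * W s) 0 x.
Proof. intros. symmetry. apply is_RInt_unique_R. apply HV; auto. Qed.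

Lemma pair_Wb : exists Wm, 0 <= Wm /\ forall x, 0 <= x <= 1 -> Rabs (W x) <= Wm.
Proof.
  destruct (ex_RInt_ub_R V 0 1 ltac:(lra) ltac:(eexists; apply HW; lra)) as [Vm [HVm0 HVm]].
  exists (Rabs (W 0) + lam * Vm). split. pose proof (Rabs_pos (W 0)). nra.
  intros x Hx.
  assert (E : RInt V 0 x = (W x - W 0) / lam) by (apply is_RInt_unique_R; apply HW; auto).
  assert (B : Rabs (RInt V 0 x) <= (x - 0) * Vm).
  { apply abs_RInt_le_const; [lra|eexists; apply HW; auto|]. intros t Ht. apply HVm. lra. }
  rewrite E in B.
  assert (W x = W 0 + lam * ((W x - W 0) / lam)) by (field; lra).
  rewrite H. eapply Rle_trans. apply Rabs_triang. rewrite Rabs_mult, (Rabs_pos_eq lam) by lra.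
  assert ((x - 0) * Vm <= Vm) by nra. nra.
Qed.

Lemma pair_Mq : 0 <= Mq.
Proof. specialize (HqM 0 ltac:(lra)). pose proof (pow2_ge_0 (q 0)). lra. Qed.

Lemma q2abs x : 0 <= x <= 1 -> Rabs (q x ^ 2) <= Mq.
Proof. intros. rewrite Rabs_pos_eq by apply pow2_ge_0. auto. Qed.

Lemma pair_zero : W 0 = 0 -> forall x, 0 <= x <= 1 -> W x = 0.
Proof.
  intros H0. destruct pair_Wb as [Wm [HWm0 HWm]]. pose proof pair_Mq as HMq.
  set (delta := / (2 * lam * (Mq + 1) + 1)).
  assert (Hd : 0 < delta) by (unfold delta; apply Rinv_0_lt_compat; nra).
  assert (Hd' : delta * (2 * lam * (Mq + 1) + 1) = 1) by (unfold delta; field; nra).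
  clearbody delta.
  assert (H1 : 0 <= delta * (2 * lam * (Mq + 1))) by (apply Rmult_le_pos; nra).
  assert (Hd1 : delta <= 1) by lra.
  assert (Hkey : lam * delta * delta * Mq <= / 2).
  { assert (lam * Mq * delta <= /2) by nra.
    assert (lam * Mq * delta * delta <= lam * Mq * delta) by (assert (0 <= lam * Mq * delta) by (apply Rmult_le_pos; nra); nra).
    nra. }
  assert (Cl : forall N x, 0 <= x <= 1 -> x <= INR N * delta -> W x = 0).
  { induction N; intros x Hx HxN.
    - simpl in HxN. replace x with 0 by lra. auto.
    - set (x1 := INR N * delta).
      assert (Hx1 : 0 <= x1) by (unfold x1; pose proof (pos_INR N); nra).
      destruct (Rle_dec x x1) as [Hle|Hlt]. apply IHN; auto.
      rewrite S_INR in HxN.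
      assert (Wx1 : W x1 = 0) by (apply IHN; unfold x1 in *; lra).
      assert (Vx1 : V x1 = 0).
      { rewrite pair_V by lra.
        assert (B : Rabs (RInt (fun s => q s ^ 2 * W s) 0 x1) <= (x1 - 0) * 0).
        { apply abs_RInt_le_const; [lra|eexists; apply HV; lra|].
          intros t Ht. rewrite (IHN t) by (unfold x1 in *; lra). rewrite Rmult_0_r, Rabs_R0. lra. }
        apply Rabs_le_between in B. lra. }
      assert (Inner : forall n y, x1 <= y <= x -> Rabs (W y) <= Wm * (/2) ^ n).
      { induction n; intros y Hy.
        - simpl. rewrite Rmult_1_r. apply HWm. lra.
        - assert (HVs : forall s, x1 <= s <= y -> Rabs (V s) <= delta * (Mq * (Wm * (/2) ^ n))).
          { intros s Hs. destruct (pair_dV x1 s ltac:(lra) ltac:(lra)) as [E1 E2].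
            assert (B : Rabs (RInt (fun s => q s ^ 2 * W s) x1 s) <= (s - x1) * (Mq * (Wm * (/2) ^ n))).
            { apply abs_RInt_le_const; [lra|auto|]. intros t Ht. rewrite Rabs_mult.
              apply Rmult_le_compat; try apply Rabs_pos. apply q2abs; lra. apply IHn; lra. }
            rewrite E2, Vx1, Rminus_0_r in B. eapply Rle_trans. apply B.
            apply Rmult_le_compat_r. assert (0 <= (/2) ^ n) by (apply pow_le; lra).
            apply Rmult_le_pos; auto. apply Rmult_le_pos; auto. unfold x1 in *; lra. }
          destruct (pair_dW x1 y ltac:(lra) ltac:(lra)) as [E1 E2].
          assert (B : Rabs (RInt V x1 y) <= (y - x1) * (delta * (Mq * (Wm * (/2) ^ n)))).
          { apply abs_RInt_le_const; [lra|auto|]. intros t Ht. apply HVs. lra. }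
          rewrite E2, Wx1, Rminus_0_r in B.
          assert (Hp : 0 <= (/2) ^ n) by (apply pow_le; lra).
          assert (HP : 0 <= delta * (Mq * (Wm * (/2) ^ n))) by (repeat apply Rmult_le_pos; lra).
          assert (B2 : (y - x1) * (delta * (Mq * (Wm * (/2) ^ n))) <= delta * (delta * (Mq * (Wm * (/2) ^ n)))).
          { apply Rmult_le_compat_r; auto. unfold x1 in *; lra. }
          assert (Eq : W y = lam * (W y / lam)) by (field; lra).
          rewrite Eq, Rabs_mult, (Rabs_pos_eq lam) by lra.
          assert (Rabs (W y / lam) <= delta * (delta * (Mq * (Wm * (/2) ^ n)))) by lra.
          assert (lam * Rabs (W y / lam) <= lam * (delta * (delta * (Mq * (Wm * (/2) ^ n))))) by (apply Rmult_le_compat_l; lra).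
          assert (lam * (delta * (delta * (Mq * (Wm * (/2) ^ n)))) = (lam * delta * delta * Mq) * (Wm * (/2) ^ n)) by ring.
          assert (0 <= Wm * (/2) ^ n) by (apply Rmult_le_pos; lra).
          assert ((lam * delta * delta * Mq) * (Wm * (/2) ^ n) <= / 2 * (Wm * (/2) ^ n)) by (apply Rmult_le_compat_r; lra).
          simpl. nra. }
      apply (lim_half _ Wm). intros n. apply Inner. lra. }
  intros x Hx. destruct (arch_nat (x / delta)) as [N HN]. apply (Cl N); auto.
  apply Rmult_le_reg_r with (/ delta). apply Rinv_0_lt_compat; auto.
  rewrite Rmult_assoc, Rinv_r by lra. lra.
Qed.

Lemma pair_pos m : 0 < m -> (forall x, 0 <= x <= 1 -> m <= q x ^ 2) -> 0 < W 0 ->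
  (forall x, 0 <= x <= 1 -> W 0 <= W x) /\
  (forall x y, 0 <= x <= y /\ y <= 1 -> W x <= W y) /\
  (forall c d, 0 <= c < d /\ d <= 1 -> W c * (1 + lam * m * (d - c) ^ 2 / 4) <= W d).
Proof.
  intros Hm Hqm H0. destruct pair_Wb as [Wm [HWm0 HWm]]. pose proof pair_Mq as HMq.
  set (P := (Mq + 1) * (Wm + 1)).
  assert (HP : 1 <= P) by (unfold P; nra).
  set (delta := W 0 / (2 * lam * P + W 0)).
  assert (Hd : 0 < delta) by (unfold delta; apply Rdiv_lt_0_compat; nra).
  assert (Hd' : delta * (2 * lam * P + W 0) = W 0) by (unfold delta; field; nra).
  clearbody delta.
  assert (H1 : 0 <= delta * (2 * lam * P)) by (apply Rmult_le_pos; nra).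
  assert (Hd1 : delta <= 1).
  { apply Rmult_le_reg_r with (W 0); auto. lra. }
  assert (Hkey : lam * delta * delta * (Mq * Wm) <= W 0 / 2).
  { assert (HMW : Mq * Wm <= P) by (unfold P; nra).
    assert (lam * P * delta <= W 0 / 2) by nra.
    assert (0 <= lam * delta) by nra.
    assert (lam * delta * delta * (Mq * Wm) <= lam * delta * 1 * P).
    { apply Rmult_le_compat; try lra. apply Rmult_le_pos; lra. apply Rmult_le_pos; lra.
      apply Rmult_le_compat_l; lra. }
    nra. }
  assert (GV : forall x, 0 <= x <= 1 -> (forall s, 0 < s < x -> 0 <= W s) -> 0 <= V x).
  { intros x Hx Hs. rewrite pair_V by auto. apply RInt_ge_0; [lra|eexists; apply HV; auto|].
    intros s Hs'. apply Rmult_le_pos. apply pow2_ge_0. apply Hs; auto. }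
  assert (Cl : forall N x, 0 <= x <= 1 -> x <= INR N * delta -> W 0 <= W x).
  { induction N; intros x Hx HxN.
    - simpl in HxN. replace x with 0 by lra. lra.
    - set (x1 := INR N * delta).
      assert (Hx1 : 0 <= x1) by (unfold x1; pose proof (pos_INR N); nra).
      destruct (Rle_dec x x1) as [Hle|Hlt]. apply IHN; auto.
      rewrite S_INR in HxN.
      assert (Wx1 : W 0 <= W x1) by (apply IHN; unfold x1 in *; lra).
      assert (Vx1 : 0 <= V x1).
      { apply GV. lra. intros s Hs. assert (W 0 <= W s) by (apply IHN; unfold x1 in *; lra). lra. }
      assert (Pass1 : forall y, x1 < y <= x -> 0 < W y).
      { intros y Hy.
        assert (HVs : forall s, x1 <= s <= y -> - (delta * (Mq * Wm)) <= V s).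
        { intros s Hs. destruct (pair_dV x1 s ltac:(lra) ltac:(lra)) as [E1 E2].
          assert (B : Rabs (RInt (fun s => q s ^ 2 * W s) x1 s) <= (s - x1) * (Mq * Wm)).
          { apply abs_RInt_le_const; [lra|auto|]. intros t Ht. rewrite Rabs_mult.
            apply Rmult_le_compat; try apply Rabs_pos. apply q2abs; lra. apply HWm; lra. }
          rewrite E2 in B. apply Rabs_le_between in B.
          assert ((s - x1) * (Mq * Wm) <= delta * (Mq * Wm)).
          { apply Rmult_le_compat_r. apply Rmult_le_pos; lra. unfold x1 in *; lra. }
          lra. }
        destruct (pair_dW x1 y ltac:(lra) ltac:(lra)) as [E1 E2].
        assert (B : RInt (fun _ => - (delta * (Mq * Wm))) x1 y <= RInt V x1 y).
        { apply RInt_le; [lra|apply ex_RInt_const|auto|]. intros t Ht. apply HVs. lra. }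
        rewrite RInt_const_R, E2 in B.
        assert (B2 : (y - x1) * (delta * (Mq * Wm)) <= delta * (delta * (Mq * Wm))).
        { apply Rmult_le_compat_r. apply Rmult_le_pos; [lra|apply Rmult_le_pos; lra]. unfold x1 in *; lra. }
        assert (B3 : - (delta * (delta * (Mq * Wm))) <= (W y - W x1) / lam) by lra.
        assert (Eq : W y - W x1 = lam * ((W y - W x1) / lam)) by (field; lra).
        assert (lam * (- (delta * (delta * (Mq * Wm)))) <= lam * ((W y - W x1) / lam)) by (apply Rmult_le_compat_l; lra).
        nra. }
      destruct (pair_dW x1 x ltac:(lra) ltac:(lra)) as [E1 E2].
      assert (B : 0 <= RInt V x1 x).
      { apply RInt_ge_0; [lra|auto|]. intros s Hs.
        destruct (pair_dV x1 s ltac:(lra) ltac:(lra)) as [F1 F2].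
        assert (0 <= RInt (fun s => q s ^ 2 * W s) x1 s).
        { apply RInt_ge_0; [lra|auto|]. intros t Ht. apply Rmult_le_pos. apply pow2_ge_0.
          assert (0 < W t) by (apply Pass1; lra). lra. }
        lra. }
      rewrite E2 in B.
      assert (0 <= lam * ((W x - W x1) / lam)) by (apply Rmult_le_pos; lra).
      assert (Eq : lam * ((W x - W x1) / lam) = W x - W x1) by (field; lra).
      lra. }
  assert (Pos : forall x, 0 <= x <= 1 -> W 0 <= W x).
  { intros x Hx. destruct (arch_nat (x / delta)) as [N HN]. apply (Cl N); auto.
    apply Rmult_le_reg_r with (/ delta). apply Rinv_0_lt_compat; auto.
    rewrite Rmult_assoc, Rinv_r by lra. lra. }
  assert (Vnn : forall s, 0 <= s <= 1 -> 0 <= V s).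
  { intros s Hs. apply GV; auto. intros t Ht. assert (W 0 <= W t) by (apply Pos; lra). lra. }
  assert (Mono : forall x y, 0 <= x <= y /\ y <= 1 -> W x <= W y).
  { intros x y Hxy. destruct (pair_dW x y ltac:(lra) ltac:(lra)) as [E1 E2].
    assert (B : 0 <= RInt V x y) by (apply RInt_ge_0; [lra|auto|intros; apply Vnn; lra]).
    rewrite E2 in B.
    assert (0 <= lam * ((W y - W x) / lam)) by (apply Rmult_le_pos; lra).
    assert (Eq : lam * ((W y - W x) / lam) = W y - W x) by (field; lra).
    lra. }
  repeat split; auto.
  intros c d Hcd.
  set (mid := (c + d) / 2).
  assert (Wc : 0 < W c) by (assert (W 0 <= W c) by (apply Pos; lra); lra).
  assert (HVm : forall s, mid <= s <= d -> (d - c) / 2 * (m * W c) <= V s).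
  { intros s Hs. destruct (pair_dV c s ltac:(unfold mid in *; lra) ltac:(lra)) as [E1 E2].
    assert (B : RInt (fun _ => m * W c) c s <= RInt (fun s => q s ^ 2 * W s) c s).
    { apply RInt_le; [unfold mid in *; lra|apply ex_RInt_const|auto|]. intros t Ht.
      assert (W c <= W t) by (apply Mono; unfold mid in *; lra).
      assert (m <= q t ^ 2) by (apply Hqm; unfold mid in *; lra).
      apply Rmult_le_compat; lra. }
    rewrite RInt_const_R, E2 in B.
    assert (0 <= V c) by (apply Vnn; lra).
    assert ((d - c) / 2 * (m * W c) <= (s - c) * (m * W c)).
    { apply Rmult_le_compat_r. apply Rmult_le_pos; lra. unfold mid in *; lra. }
    lra. }
  destruct (pair_dW c d ltac:(lra) ltac:(lra)) as [E1 E2].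
  assert (Ec : ex_RInt V c mid) by (apply exC1 with d; [unfold mid; lra|auto]).
  assert (Ed : ex_RInt V mid d) by (apply exC2 with c; [unfold mid; lra|auto]).
  pose proof (RInt_Chasles_R V c mid d Ec Ed) as Ch.
  assert (R1 : 0 <= RInt V c mid) by (apply RInt_ge_0; [unfold mid; lra|auto|intros; apply Vnn; unfold mid in *; lra]).
  assert (R2 : RInt (fun _ => (d - c) / 2 * (m * W c)) mid d <= RInt V mid d).
  { apply RInt_le; [unfold mid; lra|apply ex_RInt_const|auto|]. intros t Ht. apply HVm. lra. }
  rewrite RInt_const_R in R2.
  assert (Hb : (d - c) ^ 2 / 4 * (m * W c) <= (W d - W c) / lam).
  { rewrite <- E2, <- Ch. assert (Eq : (d - c) ^ 2 / 4 * (m * W c) = (d - mid) * ((d - c) / 2 * (m * W c))) by (unfold mid; field).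
    rewrite Eq. lra. }
  assert (lam * ((d - c) ^ 2 / 4 * (m * W c)) <= lam * ((W d - W c) / lam)) by (apply Rmult_le_compat_l; lra).
  assert (Eq : lam * ((W d - W c) / lam) = W d - W c) by (field; lra).
  nra.
Qed.
End Pair.
Lemma neg_RInt (f : R -> R) a b (I : R) : is_RInt f a b I -> is_RInt (fun x => - f x) a b (- I).
Proof. intros H. pose proof (is_RInt_mulc f a b I (-1) H) as H'.
  replace (- I) with (-1 * I) by ring. apply is_RInt_ext with (2 := H'). intros x _. change (-1 * f x = - f x :> R). ring. Qed.

Lemma vlem q v lam m Mq Lq : is_v q v -> 0 < lam -> 0 < m ->
  (forall x, 0 <= x <= 1 -> m <= q x ^ 2) -> (forall x, 0 <= x <= 1 -> q x ^ 2 <= Mq) ->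
  (forall x, 0 < x < 1 -> ~ In x Lq -> exists a b c, a < x < b /\ forall y, a < y < b -> q y ^ 2 = c) ->
  exists sg W, (sg = 1 \/ sg = -1) /\ (forall x, 0 <= x <= 1 -> 0 < W x) /\
   (forall x y, 0 <= x <= y /\ y <= 1 -> W x <= W y) /\
   (forall c d, 0 <= c < d /\ d <= 1 -> W c * (1 + lam * m * (d - c) ^ 2 / 4) <= W d) /\
   (forall x, 0 < x < 1 -> ~ In x Lq -> Derive (fun y => v y lam) x = sg * q x ^ 2 * W x).
Proof.
  intros Hv Hl Hm Hqm HqM HLq.
  destruct (Hv lam ltac:(lra)) as [Hv0 [[xs [Hxs Hvxs]] [w Hw]]].
  assert (HV : forall x, 0 <= x <= 1 -> is_RInt (fun s => q s ^ 2 * w s) 0 x (v x lam)) by (intros; apply Hw; auto).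
  assert (HW : forall x, 0 <= x <= 1 -> is_RInt (fun s => v s lam) 0 x ((w x - w 0) / lam)).
  { intros x Hx. destruct (proj2 (Hw x Hx)) as [I [HI HwI]].
    assert (E : forall J : R, w x = w 0 + lam * J -> J = (w x - w 0) / lam) by (intros J HJ; rewrite HJ; field; lra).
    rewrite <- (E I HwI). auto. }
  assert (Der : forall x, 0 < x < 1 -> ~ In x Lq -> Derive (fun y => v y lam) x = q x ^ 2 * w x).
  { intros x Hx Hn. destruct (HLq x Hx Hn) as [a [b [c [Hab Hc]]]].
    assert (Ci : continuous (fun z => (w z - w 0) / lam) x).
    { apply (continuous_RInt_1 (fun s => v s lam) 0 x).
      apply (loc_int 0 1); auto. intros y Hy. apply HW. lra. }
    assert (Cw : continuous w x).
    { assert (C1 : continuous (fun z => plus (w 0) (mult lam ((w z - w 0) / lam))) x).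
      { apply (@continuous_plus R_UniformSpace R_AbsRing R_NormedModule (fun _ => w 0) (fun z => mult lam ((w z - w 0) / lam)) x).
        apply continuous_const. apply (@continuous_mult R_UniformSpace R_AbsRing (fun _ => lam)). apply continuous_const. exact Ci. }
      apply continuous_ext with (2 := C1). intros z. unfold plus, mult. simpl. field. lra. }
    assert (Cf : continuous (fun s => q s ^ 2 * w s) x).
    { assert (C1 : continuous (fun s => mult c (w s)) x).
      { apply (@continuous_mult R_UniformSpace R_AbsRing (fun _ => c)). apply continuous_const. exact Cw. }
      apply continuous_ext_loc with (2 := C1).
      apply (loc_int (Rmax a 0) (Rmin b 1)). split.
      apply Rmax_lub_lt; lra. apply Rmin_glb_lt; lra.
      intros y Hy. pose proof (Rmax_l a 0). pose proof (Rmin_l b 1).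
      rewrite <- (Hc y) by lra. unfold mult; simpl. ring. }
    apply is_derive_unique.
    apply (is_derive_RInt (fun s => q s ^ 2 * w s) (fun y => v y lam) 0 x).
    - apply (loc_int 0 1); auto. intros y Hy. apply HV. lra.
    - exact Cf. }
  destruct (Rtotal_order (w 0) 0) as [Hneg|[Hz|Hpos]].
  -
    set (W := fun x => - w x).
    assert (HV' : forall x, 0 <= x <= 1 -> is_RInt (fun s => q s ^ 2 * W s) 0 x (- v x lam)).
    { intros x Hx. apply is_RInt_ext with (f := fun s => - (q s ^ 2 * w s)). intros s _. change (- (q s ^ 2 * w s) = q s ^ 2 * W s :> R). unfold W; ring.
      apply neg_RInt. auto. }
    assert (HW' : forall x, 0 <= x <= 1 -> is_RInt (fun s => - v s lam) 0 x ((W x - W 0) / lam)).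
    { intros x Hx. replace ((W x - W 0) / lam) with (- ((w x - w 0) / lam)) by (unfold W; field; lra).
      apply neg_RInt. auto. }
    destruct (pair_pos q (fun s => - v s lam) W lam Mq Hl HqM HV' HW' m Hm Hqm) as [P1 [P2 P3]].
    unfold W; lra.
    exists (-1), W. repeat split; auto.
    + intros x Hx. specialize (P1 x Hx). unfold W in *. lra.
    + intros x Hx Hn. rewrite Der; auto. unfold W. ring.
  - exfalso. apply Hvxs.
    assert (Z := pair_zero q (fun s => v s lam) w lam Mq Hl HqM HV HW Hz).
    assert (E : RInt (fun s => q s ^ 2 * w s) 0 xs = v xs lam) by (apply is_RInt_unique_R; auto).
    assert (B : Rabs (RInt (fun s => q s ^ 2 * w s) 0 xs) <= (xs - 0) * 0).
    { apply abs_RInt_le_const; [lra|eexists; apply HV; auto|].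
      intros t Ht. rewrite Z by lra. rewrite Rmult_0_r, Rabs_R0. lra. }
    rewrite E in B. apply Rabs_le_between in B. lra.
  - destruct (pair_pos q (fun s => v s lam) w lam Mq Hl HqM HV HW m Hm Hqm Hpos) as [P1 [P2 P3]].
    exists 1, w. repeat split; auto.
    + intros x Hx. specialize (P1 x Hx). lra.
    + intros x Hx Hn. rewrite Der; auto. ring.
Qed.
Lemma final_contra A B al : 0 < A -> 0 < al -> (forall k, 0 < k -> A * (1 + k * k * al) <= B) -> False.
Proof. intros HA Hal H.
  assert (HAal : 0 < A * al) by (apply Rmult_lt_0_compat; auto).
  set (k := 1 + Rabs B / (A * al)).
  assert (H0 : 0 <= Rabs B / (A * al)) by (apply Rdiv_le_0_compat; [apply Rabs_pos|auto]).
  assert (Hk : 1 <= k) by (unfold k; lra).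
  assert (Hkk : k * (A * al) = A * al + Rabs B) by (unfold k; field; lra).
  clearbody k.
  specialize (H k ltac:(lra)).
  assert (k * (A * al) <= k * k * (A * al)).
  { rewrite <- (Rmult_1_l (k * (A * al))) at 1. rewrite Rmult_assoc. apply Rmult_le_compat_r; nra. }
  pose proof (Rle_abs B). nra.
Qed.

Lemma endgame (G F : R -> R) (a b K Y T : R) :
  0 <= a -> a < b -> b <= 1 ->
  is_RInt G 0 1 0 -> is_RInt G b 1 0 -> 0 <= Y -> 0 <= K ->
  (forall x, 0 <= x <= 1 -> 0 < F x) ->
  (forall x y, 0 <= x <= y /\ y <= 1 -> F x <= F y) ->
  (forall x, 0 <= x <= a + (b - a) / 3 -> Rabs (G x) <= Y * F (a + (b - a) / 3)) ->
  (forall x, a < x < b -> G x = K * F x) ->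
  F (a + (b - a) / 3) * T <= F (a + 2 * (b - a) / 3) ->
  (b - (a + 2 * (b - a) / 3)) * K * T <= Y.
Proof.
  intros Ha Hab Hb1 HG1 HGb HY HK Fpos Fmono HL HM HT.
  set (c := a + (b - a) / 3) in *. set (d := a + 2 * (b - a) / 3) in *.
  assert (Hc : a <= c /\ c < d /\ d < b) by (unfold c, d; lra).
  clearbody c d.
  assert (Cr := core G c d b (Y * F c) (K * F d) ltac:(lra) ltac:(lra) ltac:(lra) Hb1 HG1 HGb HL).
  assert (Fc : 0 < F c) by (apply Fpos; lra).
  assert (Fd : F c <= F d) by (apply Fmono; lra).
  assert (Cr' : (b - d) * (K * F d) <= c * (Y * F c)).
  { apply Cr.
    - intros x Hx. rewrite HM by lra. apply Rmult_le_pos; auto. apply Rlt_le, Fpos; lra.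
    - intros x Hx. rewrite HM by lra. apply Rmult_le_compat_l; auto. apply Fmono; lra. }
  assert (c * (Y * F c) <= Y * F c).
  { rewrite <- (Rmult_1_l (Y * F c)) at 2. apply Rmult_le_compat_r. apply Rmult_le_pos; lra. lra. }
  assert (X0 : 0 <= (b - d) * K) by (apply Rmult_le_pos; lra).
  assert (((b - d) * K) * (F c * T) <= ((b - d) * K) * F d) by (apply Rmult_le_compat_l; auto).
  assert (E : (b - d) * K * T * F c <= Y * F c) by nra.
  apply Rmult_le_reg_r in E; auto.
Qed.

Theorem theorem2 (q1 q2 : R -> R) (psi1 psi2 v1 v2 : R -> R -> R) :
  pw_const (fun x => q1 x ^ 2) -> pw_const (fun x => q2 x ^ 2) ->
  (forall x, 0 <= x <= 1 -> 0 < q1 x ^ 2) ->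
  (forall x, 0 <= x <= 1 -> 0 < q2 x ^ 2) ->
  is_psi q1 psi1 -> is_psi q2 psi2 ->
  is_v q1 v1 -> is_v q2 v2 ->
  (forall h : R -> R, pw_const h ->
     (forall k, 0 < k -> is_RInt (fun x => h x * psi1 x k * psi2 x k) 0 1 0) ->
     zero_on_01 h) /\
  (forall h : R -> R, pw_const h ->
     (forall lam, 0 < lam ->
        is_RInt (fun x => h x * Derive (fun y => v1 y lam) x
                              * Derive (fun y => v2 y lam) x) 0 1 0) ->
     zero_on_01 h).
Proof.
  intros Hq1 Hq2 Hp1 Hp2 Hpsi1 Hpsi2 Hv1 Hv2.
  destruct (pw_lower _ Hq1 Hp1) as [m1 [Hm1 Hm1']].
  destruct (pw_lower _ Hq2 Hp2) as [m2 [Hm2 Hm2']].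
  split.
  - intros h Hh Hint. apply NNPP. intros Hnz.
    destruct (pw_last h Hh Hnz) as [a [b [C [l [Ha0 [Hab [Hb1 [HC [HhC Htail]]]]]]]]].
    destruct (pw_bound h Hh) as [Mh HMh].
    assert (HMh0 : 0 <= Mh) by (specialize (HMh 0 ltac:(lra)); pose proof (Rabs_pos (h 0)); lra).
    assert (HCC : 0 < C * C) by (assert (C * C = Rsqr C) by reflexivity; pose proof (Rsqr_pos_lt C HC); lra).
    set (d := a + 2 * (b - a) / 3). set (c := a + (b - a) / 3).
    apply (final_contra ((b - d) * (C * C)) (Rabs C * Mh) (m1 * (d - c) ^ 2 / 4)).
    + apply Rmult_lt_0_compat; auto. unfold d; lra.
    + assert (0 < (d - c) ^ 2) by (apply pow_lt; unfold c, d; lra). nra.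
    + intros k Hk.
      destruct (psilem q1 psi1 m1 k Hpsi1 Hm1 Hm1' Hk) as [P1 [M1 G1]].
      destruct (psilem q2 psi2 m2 k Hpsi2 Hm2 Hm2' Hk) as [P2 [M2 G2]].
      set (F := fun x => psi1 x k * psi2 x k).
      set (G := fun x => C * (h x * psi1 x k * psi2 x k)).
      assert (HG1 : is_RInt G 0 1 0).
      { pose proof (is_RInt_mulc _ 0 1 0 C (Hint k Hk)) as H. rewrite Rmult_0_r in H. exact H. }
      assert (HGb : is_RInt G b 1 0).
      { apply (fin_pts (fun _ => 0) G l b 1 0 Hb1); [|apply is_RInt_zero].
        intros x Hx Hn. unfold G. rewrite (Htail x Hx Hn). ring. }
      assert (Fpos : forall x, 0 <= x <= 1 -> 0 < F x).
      { intros x Hx. unfold F. specialize (P1 x Hx). specialize (P2 x Hx). nra. }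
      assert (Fmono : forall x y, 0 <= x <= y /\ y <= 1 -> F x <= F y).
      { intros x y Hxy. unfold F. assert (1 <= psi1 x k) by (apply P1; lra).
        assert (1 <= psi2 x k) by (apply P2; lra).
        apply Rmult_le_compat; try lra; auto. }
      assert (E := endgame G F a b (C * C) (Rabs C * Mh) (1 + k * k * (m1 * (d - c) ^ 2 / 4))
        Ha0 Hab Hb1 HG1 HGb ltac:(apply Rmult_le_pos; auto; apply Rabs_pos) ltac:(lra) Fpos Fmono).
      fold c d in E.
      assert (Hcd : 0 <= c < d /\ d <= 1) by (unfold c, d; lra).
      assert (E2 : (b - d) * (C * C) * (1 + k * k * (m1 * (d - c) ^ 2 / 4)) <= Rabs C * Mh).
      { apply E.
        - intros x Hx. unfold G. replace (C * (h x * psi1 x k * psi2 x k)) with (C * (h x * F x)) by (unfold F; ring).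
          rewrite !Rabs_mult. rewrite (Rabs_pos_eq (F x)) by (apply Rlt_le, Fpos; lra).
          rewrite Rmult_assoc. apply Rmult_le_compat_l. apply Rabs_pos.
          apply Rmult_le_compat; try apply Rabs_pos. apply Rlt_le, Fpos; lra. apply HMh; lra. apply Fmono; lra.
        - intros x Hx. unfold G, F. rewrite HhC by auto. ring.
        - unfold F. specialize (G1 c d Hcd). assert (1 <= psi2 c k) by (apply P2; lra).
          assert (psi2 c k <= psi2 d k) by (apply M2; lra). assert (1 <= psi1 c k) by (apply P1; lra).
          replace (1 + k * k * (m1 * (d - c) ^ 2 / 4)) with (1 + k ^ 2 * m1 * (d - c) ^ 2 / 4) by field.
          assert (0 <= psi1 c k * (1 + k ^ 2 * m1 * (d - c) ^ 2 / 4)).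
          { apply Rmult_le_pos. lra. assert (0 <= (d - c) ^ 2) by apply pow2_ge_0.
            assert (0 <= k ^ 2) by apply pow2_ge_0. assert (0 <= k ^ 2 * m1 * (d - c) ^ 2) by (repeat apply Rmult_le_pos; lra). lra. }
          replace (psi1 c k * psi2 c k * (1 + k ^ 2 * m1 * (d - c) ^ 2 / 4)) with ((psi1 c k * (1 + k ^ 2 * m1 * (d - c) ^ 2 / 4)) * psi2 c k) by ring.
          apply Rmult_le_compat; lra. }
      lra.
  - intros h Hh Hint. apply NNPP. intros Hnz.
    destruct (pw_last h Hh Hnz) as [a [b [C [l [Ha0 [Hab [Hb1 [HC [HhC Htail]]]]]]]]].
    destruct (pw_bound h Hh) as [Mh HMh].
    destruct (pw_bound _ Hq1) as [Mq1 HMq1].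
    destruct (pw_bound _ Hq2) as [Mq2 HMq2].
    assert (HMq1' : forall x, 0 <= x <= 1 -> q1 x ^ 2 <= Mq1) by (intros; eapply Rle_trans; [apply Rle_abs|auto]).
    assert (HMq2' : forall x, 0 <= x <= 1 -> q2 x ^ 2 <= Mq2) by (intros; eapply Rle_trans; [apply Rle_abs|auto]).
    destruct (pw_pts _ Hq1) as [Lq1 HL1].
    destruct (pw_pts _ Hq2) as [Lq2 HL2].
    destruct (pw_left _ Hq1 b ltac:(lra)) as [a1 [Q1 [Ha1 HQ1]]].
    destruct (pw_left _ Hq2 b ltac:(lra)) as [a2 [Q2 [Ha2 HQ2]]].
    set (a' := Rmax a (Rmax a1 a2)).
    assert (Ha'0 : a <= a' /\ a1 <= a' /\ a2 <= a').
    { unfold a'. pose proof (Rmax_l a (Rmax a1 a2)). pose proof (Rmax_r a (Rmax a1 a2)).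
      pose proof (Rmax_l a1 a2). pose proof (Rmax_r a1 a2). lra. }
    assert (Ha'b : a' < b).
    { unfold a'. apply Rmax_lub_lt; auto. apply Rmax_lub_lt; auto. }
    clearbody a'.
    assert (HQ1p : 0 < Q1).
    { rewrite <- (HQ1 ((a' + b) / 2)) by lra. apply Hp1. lra. }
    assert (HQ2p : 0 < Q2).
    { rewrite <- (HQ2 ((a' + b) / 2)) by lra. apply Hp2. lra. }
    assert (HMh0 : 0 <= Mh) by (specialize (HMh 0 ltac:(lra)); pose proof (Rabs_pos (h 0)); lra).
    assert (HMq10 : 0 <= Mq1) by (specialize (HMq1 0 ltac:(lra)); pose proof (Rabs_pos (q1 0 ^ 2)); lra).
    assert (HMq20 : 0 <= Mq2) by (specialize (HMq2 0 ltac:(lra)); pose proof (Rabs_pos (q2 0 ^ 2)); lra).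
    assert (HCC : 0 < C * C) by (assert (C * C = Rsqr C) by reflexivity; pose proof (Rsqr_pos_lt C HC); lra).
    set (d := a' + 2 * (b - a') / 3). set (c := a' + (b - a') / 3).
    set (Y := Rabs C * (Mh * Mq1 * Mq2)).
    assert (HY : 0 <= Y) by (unfold Y; apply Rmult_le_pos; [apply Rabs_pos|repeat apply Rmult_le_pos; auto]).
    set (K := C * C * (Q1 * Q2)).
    assert (HK : 0 < K) by (unfold K; apply Rmult_lt_0_compat; auto; apply Rmult_lt_0_compat; auto).
    apply (final_contra ((b - d) * K) Y (m1 * (d - c) ^ 2 / 4)).
    + apply Rmult_lt_0_compat; auto. unfold d; lra.
    + assert (0 < (d - c) ^ 2) by (apply pow_lt; unfold c, d; lra). nra.
    + intros k Hk. set (lam := k * k). assert (Hlam : 0 < lam) by (unfold lam; nra).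
      destruct (vlem q1 v1 lam m1 Mq1 Lq1 Hv1 Hlam Hm1 Hm1' HMq1' HL1) as [s1 [W1 [Hs1 [P1 [M1 [G1 D1]]]]]].
      destruct (vlem q2 v2 lam m2 Mq2 Lq2 Hv2 Hlam Hm2 Hm2' HMq2' HL2) as [s2 [W2 [Hs2 [P2 [M2 [G2 D2]]]]]].
      set (s := s1 * s2).
      assert (Hss : s * s = 1) by (unfold s; destruct Hs1 as [-> | ->]; destruct Hs2 as [-> | ->]; ring).
      set (F := fun x => W1 x * W2 x).
      set (G := fun x => (C * s) * (h x * (s1 * q1 x ^ 2 * W1 x) * (s2 * q2 x ^ 2 * W2 x))).
      assert (EG : forall x, G x = C * (h x * q1 x ^ 2 * q2 x ^ 2 * F x)).
      { intros x. unfold G, F.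
        transitivity (C * (s * s) * (h x * q1 x ^ 2 * q2 x ^ 2 * (W1 x * W2 x))).
        unfold s; ring. rewrite Hss. ring. }
      assert (HG1 : is_RInt G 0 1 0).
      { pose proof (Hint lam Hlam) as H.
        apply (fin_pts _ (fun x => h x * (s1 * q1 x ^ 2 * W1 x) * (s2 * q2 x ^ 2 * W2 x)) (Lq1 ++ Lq2) 0 1 0) in H.
        pose proof (is_RInt_mulc _ 0 1 0 (C * s) H) as H'. rewrite Rmult_0_r in H'. exact H'.
        lra. intros x Hx Hn. rewrite D1, D2; auto.
        intros Hin; apply Hn; apply in_or_app; auto.
        intros Hin; apply Hn; apply in_or_app; auto. }
      assert (HGb : is_RInt G b 1 0).
      { apply (fin_pts (fun _ => 0) G l b 1 0 Hb1); [|apply is_RInt_zero].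
        intros x Hx Hn. rewrite EG. rewrite (Htail x Hx Hn). ring. }
      assert (Fpos : forall x, 0 <= x <= 1 -> 0 < F x).
      { intros x Hx. unfold F. specialize (P1 x Hx). specialize (P2 x Hx). nra. }
      assert (Fmono : forall x y, 0 <= x <= y /\ y <= 1 -> F x <= F y).
      { intros x y Hxy. unfold F. assert (0 < W1 x) by (apply P1; lra).
        assert (0 < W2 x) by (apply P2; lra).
        apply Rmult_le_compat; try lra; auto. }
      assert (Ha'0' : 0 <= a') by lra.
      assert (E := endgame G F a' b K Y (1 + k * k * (m1 * (d - c) ^ 2 / 4))
        Ha'0' Ha'b Hb1 HG1 HGb HY ltac:(lra) Fpos Fmono).
      fold c d in E.
      assert (Hcd : 0 <= c < d /\ d <= 1) by (unfold c, d; lra).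
      apply E.
      * intros x Hx. rewrite EG. unfold Y.
        assert (Hx1 : 0 <= x <= 1) by (unfold c in Hx; lra).
        replace (h x * q1 x ^ 2 * q2 x ^ 2 * F x) with (h x * (q1 x ^ 2 * (q2 x ^ 2 * F x))) by ring.
        rewrite !Rabs_mult.
        rewrite (Rabs_pos_eq (F x)) by (apply Rlt_le, Fpos; lra).
        rewrite (Rabs_pos_eq (q1 x ^ 2)) by apply pow2_ge_0.
        rewrite (Rabs_pos_eq (q2 x ^ 2)) by apply pow2_ge_0.
        replace (Rabs C * (Mh * Mq1 * Mq2) * F c) with (Rabs C * (Mh * (Mq1 * (Mq2 * F c)))) by ring.
        apply Rmult_le_compat_l. apply Rabs_pos.
        assert (0 < F x) by (apply Fpos; lra).
        assert (F x <= F c) by (apply Fmono; lra).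
        apply Rmult_le_compat; try apply Rabs_pos. apply Rmult_le_pos; [apply pow2_ge_0|apply Rmult_le_pos; [apply pow2_ge_0|lra]].
        apply HMh; lra.
        apply Rmult_le_compat; try apply pow2_ge_0. apply Rmult_le_pos; [apply pow2_ge_0|lra]. auto.
        apply Rmult_le_compat; try apply pow2_ge_0; try lra. auto.
      * intros x Hx. rewrite EG. rewrite HhC by lra. rewrite HQ1, HQ2 by lra. unfold K. ring.
      * unfold F. specialize (G1 c d Hcd). assert (0 < W2 c) by (apply P2; lra).
        assert (W2 c <= W2 d) by (apply M2; lra). assert (0 < W1 c) by (apply P1; lra).
        replace (1 + k * k * (m1 * (d - c) ^ 2 / 4)) with (1 + lam * m1 * (d - c) ^ 2 / 4) by (unfold lam; field).
        assert (0 <= W1 c * (1 + lam * m1 * (d - c) ^ 2 / 4)).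
        { apply Rmult_le_pos. lra. assert (0 <= (d - c) ^ 2) by apply pow2_ge_0.
          assert (0 <= lam * m1 * (d - c) ^ 2) by (repeat apply Rmult_le_pos; lra). lra. }
        replace (W1 c * W2 c * (1 + lam * m1 * (d - c) ^ 2 / 4)) with ((W1 c * (1 + lam * m1 * (d - c) ^ 2 / 4)) * W2 c) by ring.
        apply Rmult_le_compat; lra.
Qed.
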